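(* Let $m=1$, $n,T\in\mathbb{N}$, $L\in[1,T]$ with $n+L\le T$, $u_{[0,T-1]}\in\mathbb{R}^T$, and let $\eta=\begin{bmatrix}\eta_0&\cdots&\eta_{n+L-1}\end{bmatrix}^\top\in\mathbb{R}^{n+L}\setminus\{0\}$ satisfy $\eta^\top\mathcal{H}_{n+L}(u_{[0,T-1]})=0$. Define $\Lambda(\eta)=\{\lambda\in\mathbb{C}:\sum_{i=0}^{n+L-1}\lambda^i\eta_i=0\}$. Then for every $A\in\mathbb{R}^{n\times n}$ with $\operatorname{spec}A\cap\Lambda(\eta)=\varnothing$ and every $B\in\mathbb{R}^{n}$, there exists a state sequence $x_{[0,T-L]}$ satisfying $x(t+1)=Ax(t)+Bu(t)$ for all $t\in[0,T-L-1]$ such that $$\operatorname{rank}\begin{bmatrix}\mathcal{H}_L(u_{[0,T-1]})\\ \mathcal{H}_1(x_{[0,T-L]})\end{bmatrix}<n+L.$$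
   Context: For $v:\mathbb{Z}_+\to\mathbb{R}^q$, $v_{[0,T-1]}=\begin{bmatrix}v(0)^\top & \cdots & v(T-1)^\top\end{bmatrix}^\top$. For $k\in[1,T]$ the Hankel matrix of depth $k$ is the $qk\times(T-k+1)$ block matrix $\mathcal{H}_k(v_{[0,T-1]})$ whose $(i,j)$ block ($i\in[0,k-1]$, $j\in[0,T-k]$) is $v(i+j)$; in particular $\mathcal{H}_1(x_{[0,T-L]})=\begin{bmatrix}x(0)&\cdots&x(T-L)\end{bmatrix}$. $\operatorname{spec}A$ denotes the set of (complex) eigenvalues of $A$. *)

(* Defs.v *)
(* Real scalars: an arbitrary real closed field R (covers R = the reals);
   complex numbers: R[i] from mathcomp-real-closed. *)
From HB Require Import structures.
From mathcomp Require Import all_boot all_order all_algebra.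
From mathcomp.real_closed Require Import complex.
Set Implicit Arguments. Unset Strict Implicit. Unset Printing Implicit Defensive.
Import Order.TTheory GRing.Theory Num.Theory.
Local Open Scope ring_scope.

Definition hankel (R : Type) (k N : nat) (v : nat -> R) : 'M[R]_(k, N - k + 1) :=
  \matrix_(i < k, j < N - k + 1) v (i + j)%N.

Definition hankel1 (R : Type) (n M : nat) (x : nat -> 'cV[R]_n) : 'M[R]_(n, M) :=
  \matrix_(i < n, j < M) x j i ord0.

Definition cmx (R : rcfType) (n : nat) (A : 'M[R]_n) : 'M[R[i]]_n :=
  map_mx (fun a => a%:C%C) A.

Definition spec (R : rcfType) (n : nat) (A : 'M[R]_n) (lam : R[i]) : Prop :=
  eigenvalue (cmx A) lam.

Definition Lambda (R : rcfType) (d : nat) (eta : 'cV[R]_d) (lam : R[i]) : Prop :=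
  \sum_(i < d) lam ^+ i * (eta i ord0)%:C%C = 0.

(* Main.v *)
Require Import Defs.
From HB Require Import structures.
From mathcomp Require Import all_boot all_order all_algebra.
From mathcomp.real_closed Require Import complex.
From Stdlib Require Import Lia.
From mathcomp Require Import zify.
Import Order.TTheory GRing.Theory Num.Theory.
Local Open Scope ring_scope.

Lemma unit_lemma (R : rcfType) (n N : nat) (A : 'M[R]_n) (c : 'I_N -> R)
  (i0 : 'I_N) (hc : c i0 != 0)
  (hs : forall lam : R[i], eigenvalue (cmx A) lam ->
        \sum_(i < N) lam ^+ i * (c i)%:C%C != 0) :
  (\sum_(i < N) c i *: A ^+ i) \in unitmx.
Proof.
case: n A hs => [|n'] A hs; first by rewrite unitmxE det_mx00 unitr1.
set cA := cmx A.
pose pC : {poly R[i]} := \sum_(i < N) (c i)%:C%C *: 'X^i.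
have cmxP : cmx (\sum_(i < N) c i *: A ^+ i) = horner_mx cA pC.
  rewrite /pC rmorph_sum /=.
  rewrite /cmx (map_mx_sum (real_complex R)).
  apply: eq_bigr => i _.
  by rewrite map_mxZ horner_mxZ rmorphXn /= rmorphXn /= horner_mx_X.
have pC0 : pC != 0.
  apply/eqP => /(congr1 (fun p : {poly R[i]} => p`_i0)).
  rewrite coef0 coef_sum (bigD1 i0) //= coefZ coefXn eqxx mulr1.
  rewrite big1 ?addr0; last first.
    move=> j hj; rewrite coefZ coefXn.
    suff -> : (nat_of_ord i0 == j) = false by rewrite mulr0.
    by apply/negbTE; apply: contra hj => /eqP h; apply/eqP; apply: val_inj.
  by move/eqP; rewrite fmorph_eq0 (negPf hc).
have pCz : forall z, eigenvalue cA z -> pC.[z] != 0.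
  move=> z /hs; rewrite /pC horner_sum.
  congr (_ != _); apply: eq_bigr => i _.
  by rewrite hornerZ hornerXn mulrC.
rewrite unitmxE unitfE -(fmorph_eq0 (real_complex R)) -det_map_mx.
change (\det (cmx (\sum_(i < N) c i *: A ^+ i)) != 0).
rewrite cmxP.
have [rs Hp] := closed_field_poly_normal pC.
rewrite Hp horner_mxZ detZ mulf_eq0 negb_or expf_eq0 lead_coef_eq0 (negPf pC0) andbF /=.
rewrite rmorph_prod (big_morph _ (@det_mulmx _ _) (@det1 _ _)).
rewrite prodf_seq_neq0; apply/allP => z zrs /=.
rewrite rmorphB /= horner_mx_X horner_mx_C.
apply/negP => /det0P [v vn0 hv].
have ez : eigenvalue cA z.
  apply/eigenvalueP; exists v => //.
  by move/eqP: hv; rewrite mulmxBr subr_eq0 mul_mx_scalar => /eqP.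
move: (pCz z ez); rewrite Hp hornerZ horner_prod mulf_eq0 negb_or => /andP[_].
rewrite prodf_seq_neq0 => /allP /(_ z zrs).
by rewrite hornerXsubC subrr eqxx.
Qed.

Fixpoint traj (R : ringType) (n : nat) (A : 'M[R]_n) (B : 'cV[R]_n)
  (u : nat -> R) (x0 : 'cV[R]_n) (t : nat) : 'cV[R]_n :=
  match t with
  | 0 => x0
  | t'.+1 => A *m traj R n A B u x0 t' + u t' *: B
  end.
Arguments traj {R n}.

Lemma traj_lin (R : ringType) (n : nat) (A : 'M[R]_n) (B : 'cV[R]_n)
  (u : nat -> R) (x0 : 'cV[R]_n) t :
  traj A B u x0 t = A ^+ t *m x0 + traj A B u 0 t.
Proof.
elim: t => [|t IH] /=; first by rewrite expr0 mul1mx addr0.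
rewrite IH mulmxDr addrA mulmxA; congr (_ + _ + _).
case: n A B x0 IH => [|n'] A B x0 IH; first by rewrite !thinmx0.
by rewrite exprS mulmxE.
Qed.

Lemma span_lemma (F : fieldType) m p d (J : nat) (r : nat -> 'rV[F]_m) (c : nat -> F)
  (S : 'M[F]_(p, m)) (Q : nat -> bool) :
  c d != 0 ->
  (forall t, Q t -> \sum_(i < d.+1) c i *: r (t + i)%N = 0) ->
  (forall j, (j <= J)%N -> ~~ ((d <= j)%N && Q (j - d)%N) -> (r j <= S)%MS) ->
  forall j, (j <= J)%N -> (r j <= S)%MS.
Proof.
move=> cd0 hrel hbase; elim/ltn_ind => j IH hjJ.
case hb: ((d <= j)%N && Q (j - d)%N); last by apply: hbase => //; rewrite hb.
case/andP: hb => hdj hQ.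
have := hrel _ hQ; rewrite big_ord_recr /= subnK // => /eqP.
rewrite addr_eq0 => /eqP h.
have -> : r j = - (c d)^-1 *: \sum_(i < d) c i *: r (j - d + i)%N.
  by rewrite scaleNr -scalerN h opprK scalerA mulVf // scale1r.
apply: scalemx_sub; apply: summx_sub => i _; apply: scalemx_sub.
apply: IH; have := ltn_ord i; lia.
Qed.

Lemma sum_col_mx (R : nmodType) m1 m2 k I (r : seq I) (f : I -> 'M[R]_(m1, k))
  (g : I -> 'M[R]_(m2, k)) :
  \sum_(i <- r) col_mx (f i) (g i) = col_mx (\sum_(i <- r) f i) (\sum_(i <- r) g i).
Proof.
elim/big_rec3: _ => [|i a b c _ ->]; first by rewrite col_mx0.
by rewrite add_col_mx.
Qed.

Theorem proposition3 (R : rcfType) (n T L : nat) (u : nat -> R)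
  (eta : 'cV[R]_(n + L))
  (hL1 : (1 <= L)%N) (hLT : (L <= T)%N) (hnLT : (n + L <= T)%N)
  (heta0 : eta != 0)
  (heta : eta^T *m hankel (n + L) T u = 0) :
  forall (A : 'M[R]_n) (B : 'cV[R]_n),
    (forall lam : R[i], spec A lam -> ~ Lambda eta lam) ->
    exists x : nat -> 'cV[R]_n,
      (forall t : nat, (t < T - L)%N -> x t.+1 = A *m x t + u t *: B) /\
      (\rank (col_mx (hankel L T u) (hankel1 (T - L + 1) x)) < n + L)%N.
Proof.
move=> A B hspec.
pose c (i : 'I_(n + L)) := eta i ord0.
have [i0 hi0] : exists i0, c i0 != 0.
  apply/existsP; apply: contraNT heta0 => /existsPn h.
  apply/eqP/matrixP => i j; rewrite (ord1 j) mxE.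
  by have := h i; rewrite negbK => /eqP.
have hP := @unit_lemma R n (n + L)%N A c i0 hi0 (fun lam ev =>
   introN eqP (hspec lam ev)).
set P := \sum_(i < n + L) c i *: A ^+ i in hP.
pose w x0 t := \sum_(i < n + L) c i *: traj A B u x0 (t + i)%N.
pose x0 := - (invmx P *m w 0 0%N).
have w00 : w x0 0%N = 0.
  rewrite /w.
  under eq_bigr do rewrite traj_lin scalerDr scalemxAl.
  rewrite big_split /= -mulmx_suml -/P /x0 mulmxN mulmxA mulmxV // mul1mx.
  by rewrite addNr.
have wstep : forall t, w x0 t.+1 = A *m w x0 t + (\sum_(i < n + L) c i * u (t + i)%N) *: B.
  move=> t; rewrite /w mulmx_sumr scaler_suml -big_split; apply: eq_bigr => i _.
  by rewrite addSn /= scalerDr scalemxAr scalerA.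
have hu : forall s, (s + (n + L) <= T)%N -> \sum_(i < n + L) c i * u (i + s)%N = 0.
  move=> s hs; have hs' : (s < T - (n + L) + 1)%N by lia.
  transitivity ((eta^T *m hankel (n + L) T u) ord0 (Ordinal hs')); last first.
    by rewrite heta mxE.
  by rewrite mxE; apply: eq_bigr => i _; rewrite !mxE.
have hw : forall t, (t + (n + L) <= T.+1)%N -> w x0 t = 0.
  elim => [|t IH] ht; first exact: w00.
  rewrite wstep IH ?mulmx0 ?add0r; last lia.
  rewrite (_ : \sum_(i < n + L) _ = 0) ?scale0r //.
  have ht' : (t + (n + L) <= T)%N by lia.
  apply: etrans (hu t ht').
  by apply: eq_bigr => i _; rewrite addnC.
exists (traj A B u x0); split; first by [].
pose z t : 'cV[R]_(L + n) := col_mx (\col_(j < L) u (j + t)%N) (traj A B u x0 t).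
pose r t := (z t)^T.
pose Q t := (t + (n + L) + L <= T.+1)%N.
have hrelz : forall t, Q t -> \sum_(i < n + L) c i *: z (t + i)%N = 0.
  move=> t ht; rewrite /z.
  under eq_bigr do rewrite scale_col_mx.
  rewrite sum_col_mx; apply/eqP; rewrite col_mx_eq0; apply/andP; split; apply/eqP.
    apply/matrixP => j k; rewrite summxE mxE.
    have hj : (j + t + (n + L) <= T)%N by have := ltn_ord j; rewrite /Q in ht; lia.
    apply: etrans (hu _ hj).
    by apply: eq_bigr => i _; rewrite !mxE; congr (_ * u _); lia.
  by apply: hw; rewrite /Q in ht; lia.
pose pR : {poly R} := \poly_(i < n + L) eta (insubd i0 i) ord0.
have hcpR : forall i : 'I_(n + L), c i = pR`_i.
  by move=> i; rewrite coef_poly ltn_ord valKd.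
have pR0 : pR != 0.
  by apply: contra hi0 => /eqP h; rewrite hcpR h coef0.
pose d := (size pR).-1.
have hsz : (size pR <= n + L)%N by apply: size_poly.
have hszd : size pR = d.+1 by rewrite /d prednK // size_poly_gt0.
have hd : pR`_d != 0 by rewrite -lead_coefE lead_coef_eq0.
have hdN : (d < n + L)%N by lia.
have hrelr : forall t, Q t -> \sum_(i < d.+1) pR`_i *: r (t + i)%N = 0.
  move=> t ht; have := hrelz t ht.
  move/(congr1 trmx); rewrite trmx0 => h; rewrite -[RHS]h.
  rewrite raddf_sum /=.
  rewrite (big_ord_widen (n + L) (fun i => pR`_i *: r (t + i)%N) hdN).
  rewrite big_mkcond /=; apply: eq_bigr => i _.
  rewrite linearZ /= -/(r _) hcpR.
  case: ifP => // hi.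
  by rewrite nth_default ?scale0r // hszd leqNgt hi.
set M := col_mx (hankel L T u) (hankel1 (T - L + 1) (traj A B u x0)).
have hcol : forall j : 'I_(T - L + 1), col j M = z j.
  move=> j; rewrite /M col_col_mx /z; congr col_mx; apply/matrixP => a b.
    by rewrite !mxE.
  by rewrite !mxE (ord1 b).
pose g k := if (k < d)%N then k else (k - d + (T + 2 + d - (n + L + L)))%N.
pose S := \matrix_(k < (n + L).-1, l < L + n) r (g k) ord0 l.
have hrowS : forall k, row k S = r (g k) by move=> k; apply/rowP => l; rewrite !mxE.
have hsub : forall j, (j <= T - L)%N -> (r j <= S)%MS.
  apply: (@span_lemma _ _ _ d (T - L) r (fun i => pR`_i) S Q hd hrelr).
  move=> j hj hnb.
  have [k hk] : exists k : 'I_((n + L).-1), g k = j.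
    case: (ltnP j d) => hjd.
      have hk : (j < (n + L).-1)%N by lia.
      by exists (Ordinal hk); rewrite /g /= hjd.
    have hq : ~~ Q (j - d)%N by move: hnb; rewrite hjd.
    rewrite /Q -ltnNge in hq.
    have hk : (j - (T + 2 + d - (n + L + L)) + d < (n + L).-1)%N by lia.
    exists (Ordinal hk); rewrite /g /= ifN; first lia.
    by rewrite -leqNgt; lia.
  by rewrite -hk -hrowS row_sub.
rewrite -mxrank_tr.
have : (M^T <= S)%MS.
  apply/row_subP => j; rewrite -tr_col hcol; apply: hsub.
  by have := ltn_ord j; lia.
move/mxrankS => h; apply: leq_ltn_trans h _.
by apply: leq_ltn_trans (rank_leq_row S) _; lia.
Qed.
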